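(* Let $(\mathfrak{g},[\cdot,\cdot]_{\mathfrak{g}},\phi_{\mathfrak{g}})$ and $(\mathfrak{g}^*,[\cdot,\cdot]_{\mathfrak{g}^*},\phi_{\mathfrak{g}}^* )$ be two weakly involutive Hom-Lie algebras ($\mathfrak g$ finite-dimensional). Then $(\mathfrak g,\mathfrak g^*;\mathrm{ad}^\circ,\mathfrak{ad}^\circ)$ is a matched pair of Hom-Lie algebras if and only if $\Delta[x,y]_{\mathfrak g}=\mathrm{ad}_{\phi_{\mathfrak g}(x)}\Delta(y)-\mathrm{ad}_{\phi_{\mathfrak g}(y)}\Delta(x)$ for all $x,y\in\mathfrak g$, where $\Delta:\mathfrak g\to\mathfrak g\otimes\mathfrak g$ is defined by $\langle\Delta(x),a\otimes b\rangle=\langle x,[a,b]_{\mathfrak g^*}\rangle$.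
   Context: A Hom-Lie algebra $(\mathfrak{h},[\cdot,\cdot]_{\mathfrak{h}},\phi_{\mathfrak{h}})$: skew-symmetric bilinear bracket and linear map with $\phi_{\mathfrak h}[x,y]=[\phi_{\mathfrak h}x,\phi_{\mathfrak h}y]$ and $[\phi_{\mathfrak h}(x),[y,z]]+[\phi_{\mathfrak h}(y),[z,x]]+[\phi_{\mathfrak h}(z),[x,y]]=0$; weakly involutive if $[\phi_{\mathfrak h}^2(x),y]=[x,y]$. A representation $(V,\beta,\rho)$: $\beta\in\mathfrak{gl}(V)$, $\rho:\mathfrak h\to\mathfrak{gl}(V)$ with $\rho(\phi_{\mathfrak h}(x))\beta=\beta\rho(x)$ and $\rho([x,y])\beta=\rho(\phi_{\mathfrak h}(x))\rho(y)-\rho(\phi_{\mathfrak h}(y))\rho(x)$. For $z\in\mathfrak g$, $t\in\mathfrak g\otimes\mathfrak g$: $\mathrm{ad}_zt=(\mathrm{ad}_z\otimes\phi_{\mathfrak g}+\phi_{\mathfrak g}\otimes\mathrm{ad}_z)t$, $\mathrm{ad}_zy=[z,y]_{\mathfrak g}$. $\mathrm{ad}^\circ:\mathfrak g\to\mathfrak{gl}(\mathfrak g^* )$, $\langle\mathrm{ad}^\circ_xa,y\rangle=-\langle a,[\phi_{\mathfrak g}(x),y]_{\mathfrak g}\rangle$; $\mathfrak{ad}^\circ:\mathfrak g^*\to\mathfrak{gl}(\mathfrak g)$, $\langle\mathfrak{ad}^\circ_ax,b\rangle=-\langle x,[\phi_{\mathfrak g}^*(a),b]_{\mathfrak g^*}\rangle$.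 A matched pair $(\mathfrak g,\mathfrak g';\rho,\rho')$ of Hom-Lie algebras: Hom-Lie algebras $\mathfrak g,\mathfrak g'$, a representation $(\mathfrak g',\phi_{\mathfrak g'},\rho)$ of $\mathfrak g$ and a representation $(\mathfrak g,\phi_{\mathfrak g},\rho')$ of $\mathfrak g'$ with, for all $x,y\in\mathfrak g$, $x',y'\in\mathfrak g'$: $\rho'(\phi_{\mathfrak g'}(x'))[x,y]_{\mathfrak g}=[\rho'(x')x,\phi_{\mathfrak g}(y)]_{\mathfrak g}+[\phi_{\mathfrak g}(x),\rho'(x')y]_{\mathfrak g}+\rho'(\rho(y)x')\phi_{\mathfrak g}(x)-\rho'(\rho(x)x')\phi_{\mathfrak g}(y)$ and $\rho(\phi_{\mathfrak g}(x))[x',y']_{\mathfrak g'}=[\rho(x)x',\phi_{\mathfrak g'}(y')]_{\mathfrak g'}+[\phi_{\mathfrak g'}(x'),\rho(x)y']_{\mathfrak g'}+\rho(\rho'(y')x)\phi_{\mathfrak g'}(x')-\rho(\rho'(x')x)\phi_{\mathfrak g'}(y')$. *)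

(* Defs.v *)
(* A finite-dimensional space g of dimension n over a field K
   is modelled as 'rV[K]_n (coordinates in the standard basis e_i);
   its dual g^* is modelled as 'rV[K]_n with the dual basis, so that the
   pairing is <a, x> = \sum_i a_i x_i.  g (x) g is modelled as 'M[K]_n,
   the simple tensor u (x) v being u^T *m v (entry (i,j) = u_i v_j). *)
From HB Require Import structures.
From mathcomp Require Import all_boot all_order all_algebra.
Set Implicit Arguments. Unset Strict Implicit. Unset Printing Implicit Defensive.
Import GRing.Theory.
Local Open Scope ring_scope.

Section HomLie.
Variable K : fieldType.

Definition pairing (n : nat) (a x : 'rV[K]_n) : K := \sum_i a 0 i * x 0 i.

Definition ebasis (n : nat) (j : 'I_n) : 'rV[K]_n := delta_mx 0 j.

Definition linmap (n m : nat) (f : 'rV[K]_n -> 'rV[K]_m) : Prop :=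
  forall (c : K) (x y : 'rV[K]_n), f (c *: x + y) = c *: f x + f y.

Definition HomLie (n : nat) (br : 'rV[K]_n -> 'rV[K]_n -> 'rV[K]_n)
    (phi : 'rV[K]_n -> 'rV[K]_n) : Prop :=
  [/\ linmap phi,
      (forall y, linmap (fun x => br x y)) /\ (forall x, linmap (br x)),
      (forall x y, br x y = - br y x),
      (forall x y, phi (br x y) = br (phi x) (phi y)) &
      (forall x y z, br (phi x) (br y z) + br (phi y) (br z x)
                     + br (phi z) (br x y) = 0)].

Definition weakly_involutive (n : nat) (br : 'rV[K]_n -> 'rV[K]_n -> 'rV[K]_n)
    (phi : 'rV[K]_n -> 'rV[K]_n) : Prop :=
  forall x y, br (phi (phi x)) y = br x y.

Definition HomRep (n m : nat) (br : 'rV[K]_n -> 'rV[K]_n -> 'rV[K]_n)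
    (phi : 'rV[K]_n -> 'rV[K]_n) (beta : 'rV[K]_m -> 'rV[K]_m)
    (rho : 'rV[K]_n -> 'rV[K]_m -> 'rV[K]_m) : Prop :=
  [/\ linmap beta,
      (forall x, linmap (rho x)),
      (forall v, linmap (fun x => rho x v)),
      (forall x v, rho (phi x) (beta v) = beta (rho x v)) &
      (forall x y v, rho (br x y) (beta v)
                     = rho (phi x) (rho y v) - rho (phi y) (rho x v))].

Definition MatchedPair (n m : nat)
    (br : 'rV[K]_n -> 'rV[K]_n -> 'rV[K]_n) (phi : 'rV[K]_n -> 'rV[K]_n)
    (br' : 'rV[K]_m -> 'rV[K]_m -> 'rV[K]_m) (phi' : 'rV[K]_m -> 'rV[K]_m)
    (rho : 'rV[K]_n -> 'rV[K]_m -> 'rV[K]_m)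
    (rho' : 'rV[K]_m -> 'rV[K]_n -> 'rV[K]_n) : Prop :=
  [/\ HomLie br phi /\ HomLie br' phi',
      HomRep br phi phi' rho, HomRep br' phi' phi rho',
      (forall x y x',
         rho' (phi' x') (br x y)
         = br (rho' x' x) (phi y) + br (phi x) (rho' x' y)
           + rho' (rho y x') (phi x) - rho' (rho x x') (phi y)) &
      (forall x' y' x,
         rho (phi x) (br' x' y')
         = br' (rho x x') (phi' y') + br' (phi' x') (rho x y')
           + rho (rho' y' x) (phi' x') - rho (rho' x' x) (phi' y'))].

(* With (br, phi) = ([,]_g, phi_g) this is ad^o : g -> gl(g^* );
   with (br, phi) = ([,]_{g^*}, phi_g^* ) it is the map frak{ad}^o : g^* -> gl(g). *)
Definition adc (n : nat) (br : 'rV[K]_n -> 'rV[K]_n -> 'rV[K]_n)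
    (phi : 'rV[K]_n -> 'rV[K]_n) (x a : 'rV[K]_n) : 'rV[K]_n :=
  \row_j (- pairing a (br (phi x) (ebasis j))).

(* matrix of the linear map ad_z = [z, -] (acting on row vectors: x *m A = [z,x]) *)
Definition admx (n : nat) (br : 'rV[K]_n -> 'rV[K]_n -> 'rV[K]_n)
    (z : 'rV[K]_n) : 'M[K]_n :=
  \matrix_(i, j) (br z (ebasis i)) 0 j.

(* ad_z on g (x) g : (ad_z (x) phi + phi (x) ad_z) t, where phi x = x *m P.
   On u^T *m v this gives (u A)^T (v P) + (u P)^T (v A). *)
Definition adtens (n : nat) (br : 'rV[K]_n -> 'rV[K]_n -> 'rV[K]_n)
    (P : 'M[K]_n) (z : 'rV[K]_n) (t : 'M[K]_n) : 'M[K]_n :=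
  (admx br z)^T *m t *m P + P^T *m t *m admx br z.

Definition Delta (n : nat) (brd : 'rV[K]_n -> 'rV[K]_n -> 'rV[K]_n)
    (x : 'rV[K]_n) : 'M[K]_n :=
  \matrix_(i, j) pairing (brd (ebasis i) (ebasis j)) x.

End HomLie.

(* Main.v *)
Require Import Defs.
From HB Require Import structures.
From mathcomp Require Import all_boot all_order all_algebra.
Set Implicit Arguments. Unset Strict Implicit. Unset Printing Implicit Defensive.
Import GRing.Theory.
Local Open Scope ring_scope.

Lemma lin0 (K : fieldType) n m (f : 'rV[K]_n -> 'rV[K]_m) : linmap f -> f 0 = 0.
Proof. move=> h; have e := h 1 0 0; rewrite !scale1r !addr0 in e; by apply: (addrI (f 0)); rewrite addr0 -e. Qed.
Lemma linD (K : fieldType) n m (f : 'rV[K]_n -> 'rV[K]_m) : linmap f -> forall x y, f (x + y) = f x + f y.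
Proof. by move=> h x y; have := h 1 x y; rewrite !scale1r. Qed.
Lemma linZ (K : fieldType) n m (f : 'rV[K]_n -> 'rV[K]_m) : linmap f -> forall c x, f (c *: x) = c *: f x.
Proof. by move=> h c x; have := h c x 0; rewrite !addr0 (lin0 h) addr0. Qed.
Lemma linN (K : fieldType) n m (f : 'rV[K]_n -> 'rV[K]_m) : linmap f -> forall x, f (- x) = - f x.
Proof. by move=> h x; rewrite -scaleN1r (linZ h) scaleN1r. Qed.
Lemma linB (K : fieldType) n m (f : 'rV[K]_n -> 'rV[K]_m) : linmap f -> forall x y, f (x - y) = f x - f y.
Proof. by move=> h x y; rewrite (linD h) (linN h). Qed.
Lemma linS (K : fieldType) n m (f : 'rV[K]_n -> 'rV[K]_m) : linmap f ->
  forall (c : 'I_n -> K) (v : 'I_n -> 'rV[K]_n), f (\sum_i c i *: v i) = \sum_i c i *: f (v i).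
Proof.
move=> h c v; apply: (big_rec2 (fun a b => f a = b)); first exact: lin0.
by move=> i y1 y2 _ <-; rewrite h.
Qed.

Lemma pairingE (K : fieldType) n (a x : 'rV[K]_n) : pairing a x = (a *m x^T) 0 0.
Proof. by rewrite /pairing mxE; apply: eq_bigr => i _; rewrite mxE. Qed.
Lemma pairingC (K : fieldType) n (a x : 'rV[K]_n) : pairing a x = pairing x a.
Proof. by rewrite /pairing; apply: eq_bigr => i _; rewrite mulrC. Qed.
Lemma pairingDr (K : fieldType) n (a x y : 'rV[K]_n) : pairing a (x + y) = pairing a x + pairing a y.
Proof. by rewrite /pairing -big_split; apply: eq_bigr => i _; rewrite mxE mulrDr. Qed.
Lemma pairingZr (K : fieldType) n (a x : 'rV[K]_n) c : pairing a (c *: x) = c * pairing a x.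
Proof. by rewrite /pairing mulr_sumr; apply: eq_bigr => i _; rewrite mxE mulrCA. Qed.
Lemma pairingNr (K : fieldType) n (a x : 'rV[K]_n) : pairing a (- x) = - pairing a x.
Proof. by rewrite -scaleN1r pairingZr mulN1r. Qed.
Lemma pairingBr (K : fieldType) n (a x y : 'rV[K]_n) : pairing a (x - y) = pairing a x - pairing a y.
Proof. by rewrite pairingDr pairingNr. Qed.
Lemma pairingDl (K : fieldType) n (a x y : 'rV[K]_n) : pairing (x + y) a = pairing x a + pairing y a.
Proof. by rewrite !(pairingC _ a) pairingDr. Qed.
Lemma pairingZl (K : fieldType) n (a x : 'rV[K]_n) c : pairing (c *: x) a = c * pairing x a.
Proof. by rewrite !(pairingC _ a) pairingZr. Qed.
Lemma pairingNl (K : fieldType) n (a x : 'rV[K]_n) : pairing (- x) a = - pairing x a.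
Proof. by rewrite !(pairingC _ a) pairingNr. Qed.
Lemma pairingBl (K : fieldType) n (a x y : 'rV[K]_n) : pairing (x - y) a = pairing x a - pairing y a.
Proof. by rewrite !(pairingC _ a) pairingBr. Qed.
Lemma pairing_e (K : fieldType) n (a : 'rV[K]_n) j : pairing a (ebasis K j) = a 0 j.
Proof. by rewrite pairingE /ebasis trmx_delta -colE mxE. Qed.
Lemma pairing_nondeg (K : fieldType) n (a b : 'rV[K]_n) : (forall y, pairing a y = pairing b y) -> a = b.
Proof. by move=> h; apply/rowP => j; rewrite -!pairing_e h. Qed.
Lemma pairingT (K : fieldType) n (Q : 'M[K]_n) (a x : 'rV[K]_n) : pairing (a *m Q^T) x = pairing a (x *m Q).
Proof. by rewrite !pairingE trmx_mul mulmxA. Qed.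
Lemma pairing_sumr (K : fieldType) n (a : 'rV[K]_n) (c : 'I_n -> K) (v : 'I_n -> 'rV[K]_n) :
  pairing a (\sum_i c i *: v i) = \sum_i c i * pairing a (v i).
Proof.
apply: (big_rec2 (fun x b => pairing a x = b)).
  by rewrite /pairing big1 // => i _; rewrite mxE mulr0.
by move=> i y1 y2 _ <-; rewrite pairingDr pairingZr.
Qed.

Lemma adcP (K : fieldType) n (br : 'rV[K]_n -> 'rV[K]_n -> 'rV[K]_n) phi x a y :
  (forall z, linmap (br z)) -> pairing (adc br phi x a) y = - pairing a (br (phi x) y).
Proof.
move=> h; rewrite {2}(row_sum_delta y) (linS (h _)) pairing_sumr /pairing -sumrN.
by apply: eq_bigr => j _; rewrite mxE mulrC -mulrN.
Qed.
Lemma adcQ (K : fieldType) n (br : 'rV[K]_n -> 'rV[K]_n -> 'rV[K]_n) (Q : 'M[K]_n) x a y :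
  (forall z, linmap (br z)) -> pairing (adc br (fun v => v *m Q) x a) y = - pairing a (br (x *m Q) y).
Proof. exact: adcP. Qed.
From mathcomp Require Import ring.

Lemma trmxN' (K : fieldType) m n (M : 'M[K]_(m, n)) : (- M)^T = - M^T.
Proof. by apply/matrixP => i j; rewrite !mxE. Qed.

Lemma rep_ok (K : fieldType) n (Q : 'M[K]_n) br :
  HomLie br (fun x => x *m Q) -> weakly_involutive br (fun x => x *m Q) ->
  HomRep br (fun x => x *m Q) (fun a => a *m Q^T) (adc br (fun x => x *m Q)).
Proof.
case=> Hphi [Hl Hr] Sk M J W.
have {}M : forall x y, br x y *m Q = br (x *m Q) (y *m Q) := M.
have {}W : forall x y, br (x *m Q *m Q) y = br x y := W.
have {}J : forall x y z, br (x *m Q) (br y z) + br (y *m Q) (br z x)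
                     + br (z *m Q) (br x y) = 0 := J.
split.
- by move=> c x y; rewrite mulmxDl scalemxAl.
- move=> x c a b; apply: pairing_nondeg => y.
  by rewrite pairingDl pairingZl !adcP // pairingDl pairingZl opprD mulrN.
- move=> a c x y; apply: pairing_nondeg => z.
  rewrite pairingDl pairingZl !adcP // mulmxDl -scalemxAl.
  have -> : br (c *: (x *m Q) + y *m Q) z = c *: br (x *m Q) z + br (y *m Q) z.
    exact: (Hl z).
  by rewrite pairingDr pairingZr opprD mulrN.
- move=> x a; apply: pairing_nondeg => y.
  rewrite adcP // pairingT M W pairingT. rewrite adcP //.
- move=> x y a; apply: pairing_nondeg => z.
  rewrite pairingBl !adcP // pairingT M !W.
  have -> : br (br x y) (z *m Q) = br (x *m Q) (br y z) - br (y *m Q) (br x z).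
    have e := J x y z.
    rewrite (Sk z x) (linN (Hr _)) in e.
    move/eqP: e; rewrite addrC addr_eq0 => /eqP e.
    by rewrite Sk e opprK.
  rewrite pairingBr; ring.
Qed.

Definition Eq4 (K : fieldType) n (br1 br2 : 'rV[K]_n -> 'rV[K]_n -> 'rV[K]_n) (Q : 'M[K]_n)
  (x y a b : 'rV[K]_n) : K :=
  pairing (br2 a b) (br1 x y)
  + pairing (br2 (adc br1 (fun v => v *m Q) x a) (b *m Q^T)) y
  + pairing (br2 (a *m Q^T) (adc br1 (fun v => v *m Q) x b)) y
  - pairing (br2 (adc br1 (fun v => v *m Q) y a) (b *m Q^T)) x
  - pairing (br2 (a *m Q^T) (adc br1 (fun v => v *m Q) y b)) x.

Lemma C2_iff (K : fieldType) n (Q : 'M[K]_n) br1 br2 :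
  HomLie br1 (fun x => x *m Q) -> weakly_involutive br1 (fun x => x *m Q) ->
  HomLie br2 (fun a => a *m Q^T) ->
  (forall a b x, adc br1 (fun v => v *m Q) (x *m Q) (br2 a b)
     = br2 (adc br1 (fun v => v *m Q) x a) (b *m Q^T)
       + br2 (a *m Q^T) (adc br1 (fun v => v *m Q) x b)
       + adc br1 (fun v => v *m Q) (adc br2 (fun v => v *m Q^T) b x) (a *m Q^T)
       - adc br1 (fun v => v *m Q) (adc br2 (fun v => v *m Q^T) a x) (b *m Q^T))
  <-> (forall x z a b, Eq4 br1 br2 Q x z a b = 0).
Proof.
case=> _ [_ Hr] Sk M _ W [_ [_ Hr2] Sk2 _ _].
have {}M : forall x y, br1 x y *m Q = br1 (x *m Q) (y *m Q) := M.
have {}W : forall x y, br1 (x *m Q *m Q) y = br1 x y := W.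
set adc1 := adc br1 (fun v => v *m Q).
set adc2 := adc br2 (fun v => v *m Q^T).
have K3 : forall a b x z, pairing (adc1 (adc2 b x) (a *m Q^T)) z
                         = - pairing (br2 (adc1 z a) (b *m Q^T)) x.
  move=> a b x z.
  rewrite /adc1 adcP // pairingT M W Sk pairingNr opprK.
  rewrite -[LHS]opprK -(adcQ _ _ _ _ Hr) pairingC /adc2 adcP // opprK.
  by rewrite Sk2 pairingNr pairingC.
have key : forall a b x z,
  pairing (br2 (adc1 x a) (b *m Q^T) + br2 (a *m Q^T) (adc1 x b)
       + adc1 (adc2 b x) (a *m Q^T) - adc1 (adc2 a x) (b *m Q^T)) z
  - pairing (adc1 (x *m Q) (br2 a b)) z = Eq4 br1 br2 Q x z a b.
  move=> a b x z.
  rewrite !pairingDl pairingNl !K3 /Eq4 /adc1 adcP // W.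
  rewrite (Sk2 (adc br1 _ z b)) pairingNl.
  ring.
split.
- move=> H x z a b; rewrite -key -H; ring.
- move=> H a b x; apply: pairing_nondeg => z.
  by apply/eqP; rewrite eq_sym -subr_eq0 key H.
Qed.

Lemma Eswap (K : fieldType) n (P : 'M[K]_n) brg brd :
  HomLie brg (fun x => x *m P) -> HomLie brd (fun a => a *m P^T) ->
  forall x y a b, Eq4 brg brd P x y a b = Eq4 brd brg P^T a b x y.
Proof.
case=> _ [_ Hrg] Skg _ _ [_ [_ Hrd] Skd _ _] x y a b.
have L1 : forall c w y, pairing (brd (c *m P^T) w) y
     = - pairing w (adc brd (fun v => v *m P^T) c y).
  by move=> c w y'; rewrite (pairingC w) (adcQ _ _ _ _ Hrd) opprK pairingC.
have L2 : forall x w a, pairing (brg (x *m P) w) a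
     = - pairing (adc brg (fun v => v *m P) x a) w.
  by move=> x' w a'; rewrite (adcQ _ _ _ _ Hrg) opprK pairingC.
rewrite /Eq4 trmxK.
rewrite (Skd (adc brg _ x a)) (Skd (adc brg _ y a)) (Skg (adc brd _ a x)) (Skg (adc brd _ b x)).
rewrite !pairingNl !L1 !L2 (pairingC (brd a b)).
ring.
Qed.

Definition bil (K : fieldType) n (M : 'M[K]_n) (a b : 'rV[K]_n) : K := (a *m M *m b^T) 0 0.

Lemma subE (K : fieldType) m n (A B : 'M[K]_(m, n)) i j : (A - B) i j = A i j - B i j.
Proof. by rewrite !mxE. Qed.
Lemma addE (K : fieldType) m n (A B : 'M[K]_(m, n)) i j : (A + B) i j = A i j + B i j.
Proof. by rewrite !mxE. Qed.
Lemma negE (K : fieldType) m n (A : 'M[K]_(m, n)) i j : (- A) i j = - A i j.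
Proof. by rewrite !mxE. Qed.

Lemma bil_e (K : fieldType) n (M : 'M[K]_n) i j : bil M (ebasis K i) (ebasis K j) = M i j.
Proof. by rewrite /bil /ebasis -rowE trmx_delta -colE !mxE. Qed.

Lemma bilB (K : fieldType) n (M N : 'M[K]_n) a b : bil (M - N) a b = bil M a b - bil N a b.
Proof. by rewrite /bil mulmxBr mulmxBl subE. Qed.

Lemma brSl (K : fieldType) n (br : 'rV[K]_n -> 'rV[K]_n -> 'rV[K]_n) :
  (forall y, linmap (fun x => br x y)) ->
  forall (c : 'I_n -> K) v y, br (\sum_i c i *: v i) y = \sum_i c i *: br (v i) y.
Proof. by move=> h c v y; exact: (linS (h y)). Qed.
Lemma brSr (K : fieldType) n (br : 'rV[K]_n -> 'rV[K]_n -> 'rV[K]_n) :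
  (forall x, linmap (br x)) ->
  forall (c : 'I_n -> K) v x, br x (\sum_i c i *: v i) = \sum_i c i *: br x (v i).
Proof. by move=> h c v x; exact: (linS (h x)). Qed.
Lemma pairing_suml (K : fieldType) n (a : 'rV[K]_n) (c : 'I_n -> K) (v : 'I_n -> 'rV[K]_n) :
  pairing (\sum_i c i *: v i) a = \sum_i c i * pairing (v i) a.
Proof. by rewrite pairingC pairing_sumr; apply: eq_bigr => i _; rewrite pairingC. Qed.

Lemma bil_Delta (K : fieldType) n (brd : 'rV[K]_n -> 'rV[K]_n -> 'rV[K]_n) y a b :
  (forall y, linmap (fun x => brd x y)) -> (forall x, linmap (brd x)) ->
  bil (Delta brd y) a b = pairing (brd a b) y.
Proof.
move=> hl hr.
have -> : pairing (brd a b) y = \sum_i \sum_j a 0 i * (b 0 j * pairing (brd (ebasis K i) (ebasis K j)) y).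
  rewrite {1}(row_sum_delta a) (brSl hl) pairing_suml.
  apply: eq_bigr => i _.
  by rewrite {1}(row_sum_delta b) (brSr hr) pairing_suml mulr_sumr.
rewrite /bil mxE.
under eq_bigr => j _ do rewrite !mxE mulr_suml.
rewrite exchange_big /=; apply: eq_bigr => i _; apply: eq_bigr => j _.
rewrite !mxE; ring.
Qed.

Lemma admxT (K : fieldType) n (P : 'M[K]_n) br x a :
  a *m (admx br (x *m P))^T = - adc br (fun v => v *m P) x a.
Proof.
apply/rowP => j; rewrite !mxE opprK /pairing.
by apply: eq_bigr => i _; rewrite !mxE.
Qed.

Lemma bil_adtens (K : fieldType) n (P : 'M[K]_n) br x t a b :
  bil (adtens br P (x *m P) t) a b
  = - bil t (adc br (fun v => v *m P) x a) (b *m P^T)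
    - bil t (a *m P^T) (adc br (fun v => v *m P) x b).
Proof.
rewrite /bil /adtens mulmxDr mulmxDl addE.
have e1 : a *m ((admx br (x *m P))^T *m t *m P) *m b^T
   = (a *m (admx br (x *m P))^T) *m t *m (b *m P^T)^T.
  by rewrite trmx_mul trmxK !mulmxA.
have e2 : a *m (P^T *m t *m admx br (x *m P)) *m b^T
   = (a *m P^T) *m t *m (b *m (admx br (x *m P))^T)^T.
  by rewrite trmx_mul trmxK !mulmxA.
rewrite e1 e2 !admxT trmxN' mulmxN mulNmx !negE.
by rewrite mulNmx negE.
Qed.

Lemma Delta_iff (K : fieldType) n (P : 'M[K]_n) brg brd x y :
  HomLie brd (fun a => a *m P^T) ->
  (Delta brd (brg x y)
      = adtens brg P (x *m P) (Delta brd y) - adtens brg P (y *m P) (Delta brd x))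
  <-> (forall a b, Eq4 brg brd P x y a b = 0).
Proof.
case=> _ [hl hr] _ _ _.
have key : forall a b, bil (Delta brd (brg x y)) a b
   - bil (adtens brg P (x *m P) (Delta brd y) - adtens brg P (y *m P) (Delta brd x)) a b
   = Eq4 brg brd P x y a b.
  move=> a b; rewrite bilB !bil_adtens !bil_Delta // /Eq4; ring.
split.
- by move=> H a b; rewrite -key H subrr.
- move=> H; apply/matrixP => i j; rewrite -!bil_e.
  by apply/eqP; rewrite -subr_eq0 key H.
Qed.

Unset Implicit Arguments.

Theorem theorem3p7 (K : fieldType) (n : nat) (P : 'M[K]_n)
    (brg brd : 'rV[K]_n -> 'rV[K]_n -> 'rV[K]_n) :
  HomLie brg (fun x => x *m P) ->
  HomLie brd (fun a => a *m P^T) ->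
  weakly_involutive brg (fun x => x *m P) ->
  weakly_involutive brd (fun a => a *m P^T) ->
  (MatchedPair brg (fun x => x *m P) brd (fun a => a *m P^T)
     (adc brg (fun x => x *m P)) (adc brd (fun a => a *m P^T))
   <->
   (forall x y : 'rV[K]_n,
      Delta brd (brg x y)
      = adtens brg P (x *m P) (Delta brd y) - adtens brg P (y *m P) (Delta brd x))).
Proof.
move=> Hg Hd Wg Wd.
have Hd' : HomLie brd (fun a => a *m P^T) := Hd.
have Hg' : HomLie brg (fun x => x *m P^T^T) by rewrite trmxK.
have C2 := C2_iff Hg Wg Hd.
have C1 := C2_iff Hd Wd Hg'.
rewrite trmxK in C1.
have Sw := Eswap Hg Hd.
split.
- case=> _ _ _ _ H2 x y; apply/(Delta_iff _ _ _ Hd) => a b.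
  exact: ((C2.1 H2) x y a b).
- move=> HD.
  have HE : forall x z a b, Eq4 brg brd P x z a b = 0.
    by move=> x z; apply/(Delta_iff _ _ _ Hd).
  split.
  + by split.
  + exact: rep_ok.
  + have := rep_ok Hd Wd; by rewrite trmxK.
  + apply: (C1.2) => x z a b; by rewrite -Sw HE.
  + exact: (C2.2 HE).
Qed.
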